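(* Let $\mathbf C$ be a clone $\tau$-algebra and $a,b\in C$ of finite dimension. Then: (1) for $f\in R_{\mathbf C}$ of arity $n$ and $g\in R_{\mathbf C}$ of arity $k$, $f$ and $g$ are similar if and only if $f(\mathsf e_1,\dots,\mathsf e_n)=g(\mathsf e_1,\dots,\mathsf e_k)$; (2) $R(a)$ is a block; (3) if $R(a)=R(b)$ then $a=b$; (4) $R_{\mathbf C}=\bigcup_{c\in\mathrm{Fi}\,\mathbf C}R(c)$ and it is a clone on the $\tau$-reduct $\mathbf C_\tau$; (5) the block $R(a)$ has arity $k$ if and only if $a$ has dimension $k$.
   Context: A clone $\tau$-algebra is an algebra $\mathbf C=(C,\sigma^{\mathbf C}\ (\sigma\in\tau),q_n^{\mathbf C}\ (n\ge0),\mathsf e_i^{\mathbf C}\ (i\ge1))$ with $\mathsf e_i$ nullary, $q_n$ of arity $n+1$, satisfying: (C1) $q_n(\mathsf e_i,x_1,\dots,x_n)=x_i$ ($1\le i\le n$); (C2) $q_n(\mathsf e_j,x_1,\dots,x_n)=\mathsf e_j$ ($j>n$); (C3) $q_n(x,\mathsf e_1,\dots,\mathsf e_n)=x$; (C4) $q_k(x,y_1,\dots,y_k)=q_n(x,y_1,\dots,y_k,\mathsf e_{k+1},\dots,\mathsf e_n)$ ($n>k$); (C5) $q_n(q_n(x,\mathbf y),\mathbf z)=q_n(x,q_n(y_1,\mathbf z),\dots,q_n(y_n,\mathbf z))$; (C6) $q_n(\sigma(x_1,\dots,x_k),\mathbf y)=\sigma(q_n(x_1,\mathbf y),\dots,q_n(x_k,\mathbf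 y))$ for $\sigma\in\tau$ of arity $k$. $a$ is independent of $\mathsf e_n$ if $q_n(a,\mathsf e_1,\dots,\mathsf e_{n-1},\mathsf e_{n+1})=a$; its dimension is $0$ if it depends on no $\mathsf e_n$, otherwise the largest $n$ it depends on (infinite if infinitely many). $\mathrm{Fi}\,\mathbf C$ is the set of finite-dimensional elements. A function $f:C^k\to C$ is $\mathbf C$-representable if $f(\mathsf e_1,\dots,\mathsf e_k)$ has dimension $\le k$ and $f(a_1,\dots,a_k)=q_k(f(\mathsf e_1,\dots,\mathsf e_k),a_1,\dots,a_k)$ for all $a_i$; $R_{\mathbf C}$ is the set of all of them. For finite-dimensional $a$, $R(a)$ is the set of $\mathbf C$-representable $f$ (of any arity $n$) with $f(\mathsf e_1,\dots,\mathsf e_n)=a$. For finitary operations $f:A^k\to A$, $g:A^n\to A$, write $f\preceq g$ if $k\le n$ and $f(\mathbf a)=g(\mathbf a,\mathbf b)$ for all $\mathbf a\in A^k$, $\mathbf b\in A^{n-k}$; $f,g$ are similar if $f\preceq g$ or $g\preceq f$. Similarity is an equivalence relation; its classes are blocks, each has a $\preceq$-least element, and the arity of a block is the arity of that least element. A clone on a $\tau$-algebra $\mathbf A$ is a set of finitary operations on $A$ (nullary included) containing all projections and all basic operations, closed under composition and under restriction (dropping a last argument on which the operation does not depend). *)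

(* Defs.v *)
From mathcomp Require Import all_boot.
Set Implicit Arguments. Unset Strict Implicit. Unset Printing Implicit Defensive.

(* Clone tau-algebra.  [e i] stands for e_i (i >= 1); [e 0] is an unused
   junk value (only ever appears as an irrelevant [nth] default).
   [q n x ys] is q_n(x, y_1, ..., y_n) with ys an n-tuple. *)
Definition etuple (C : Type) (e : nat -> C) (n : nat) : n.-tuple C :=
  [tuple e i.+1 | i < n].

Record cloneAlg (sym : Type) (ar : sym -> nat) := CloneAlg {
  carrier :> Type;
  sig : forall s : sym, (ar s).-tuple carrier -> carrier;
  q : forall n, carrier -> n.-tuple carrier -> carrier;
  e : nat -> carrier;
  axC1 : forall n i (ys : n.-tuple carrier), 1 <= i <= n ->
           q (e i) ys = nth (e 0) ys i.-1;
  axC2 : forall n j (ys : n.-tuple carrier), n < j -> q (e j) ys = e j;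
  axC3 : forall n (x : carrier), q x (etuple e n) = x;
  axC4 : forall k n (x : carrier) (ys : k.-tuple carrier), k < n ->
           q x ys = q x [tuple nth (e i.+1) ys i | i < n];
  axC5 : forall n (x : carrier) (ys zs : n.-tuple carrier),
           q (q x ys) zs = q x (map_tuple (fun y => q y zs) ys);
  axC6 : forall (s : sym) (xs : (ar s).-tuple carrier) n (ys : n.-tuple carrier),
           q (sig xs) ys = sig (map_tuple (fun x => q x ys) xs)
}.

Record op (A : Type) := Op { arity : nat; app : arity.-tuple A -> A }.
Arguments app {A} o _.

Section Defs.
Variables (sym : Type) (ar : sym -> nat) (C : cloneAlg ar).

Definition indep (a : C) (n : nat) : Prop :=
  q a [tuple e C (if i.+1 == n then n.+1 else i.+1) | i < n] = a.

Definition dim_le (a : C) (k : nat) : Prop := forall n, k < n -> indep a n.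

Definition has_dim (a : C) (k : nat) : Prop :=
  dim_le a k /\ (k = 0 \/ ~ indep a k).

Definition fin_dim (a : C) : Prop := exists k, dim_le a k.


Definition representable (f : op C) : Prop :=
  dim_le (app f (etuple (e C) (arity f))) (arity f) /\
  forall t, app f t = q (app f (etuple (e C) (arity f))) t.

Definition RC : op C -> Prop := representable.

Definition Rof (a : C) : op C -> Prop :=
  fun f => representable f /\ app f (etuple (e C) (arity f)) = a.
End Defs.

Definition op_le (A : Type) (f g : op A) : Prop :=
  exists H : arity f <= arity g,
    forall (a : (arity f).-tuple A) (b : (arity g - arity f).-tuple A),
      app f a = app g (tcast (subnKC H) [tuple of a ++ b]).

Definition similar (A : Type) (f g : op A) : Prop := op_le f g \/ op_le g f.

Definition is_block (A : Type) (B : op A -> Prop) : Prop :=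
  exists f, forall g, B g <-> similar f g.

Definition block_arity (A : Type) (B : op A -> Prop) (k : nat) : Prop :=
  exists f, [/\ B f, forall g, B g -> op_le f g & arity f = k].

Definition indep_last (A : Type) n (f : n.+1.-tuple A -> A) : Prop :=
  forall (t : n.-tuple A) x y, f [tuple of rcons t x] = f [tuple of rcons t y].

Definition is_clone (A : Type) (sym : Type) (ar : sym -> nat)
  (sg : forall s, (ar s).-tuple A -> A) (S : op A -> Prop) : Prop :=
  [/\
      forall n (i : 'I_n), S (Op (fun t : n.-tuple A => tnth t i)),
      forall s, S (Op (sg s)),
      forall f, S f -> forall m (gs : 'I_(arity f) -> m.-tuple A -> A),
        (forall i, S (Op (gs i))) ->
        S (Op (fun t : m.-tuple A => app f [tuple gs i t | i < arity f])) &
      forall n (f : n.+1.-tuple A -> A), S (Op f) -> indep_last f ->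
        forall g : n.-tuple A -> A,
          (forall t x, g t = f [tuple of rcons t x]) -> S (Op g)].

(* Main.v *)
Require Import Defs.
From mathcomp Require Import all_boot.
Set Implicit Arguments. Unset Strict Implicit.

Lemma tuple_nthE (T : Type) n (t : n.-tuple T) d : t = [tuple nth d t i | i < n].
Proof. apply: eq_from_tnth => i; by rewrite tnth_mktuple (tnth_nth d). Qed.

Lemma tcastE' (T : Type) m n (H : m = n) (t : m.-tuple T) d :
  tcast H t = [tuple nth d t i | i < n].
Proof. apply: eq_from_tnth => i; by rewrite tnth_mktuple tcastE (tnth_nth d). Qed.

Lemma eq_mktuple_nat (T : Type) n (F G : nat -> T) :
  (forall i, i < n -> F i = G i) -> [tuple F i | i < n] = [tuple G i | i < n].
Proof. move=> H; apply: eq_mktuple => i; exact: H. Qed.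

Definition Q (sym : Type) (ar : sym -> nat) (C : cloneAlg ar) m (x : C) (F : nat -> C) :=
  q x [tuple F i | i < m].

Lemma nth_mk (T : Type) n (F : nat -> T) d i : i < n -> nth d [tuple F i | i < n] i = F i.
Proof. move=> H; exact: (nth_mktuple _ d (Ordinal H)). Qed.

Lemma QE (sym : Type) (ar : sym -> nat) (C : cloneAlg ar) m (x : C) (t : m.-tuple C) :
  q x t = Q m x (fun i => nth (e C 0) t i).
Proof. by rewrite /Q -tuple_nthE. Qed.

Lemma Q_ext (sym : Type) (ar : sym -> nat) (C : cloneAlg ar) m (x : C) F G :
  (forall i, i < m -> F i = G i) -> Q m x F = Q m x G.
Proof. by move=> H; rewrite /Q (eq_mktuple_nat H). Qed.

Lemma QC1 (sym : Type) (ar : sym -> nat) (C : cloneAlg ar) m i F :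
  i < m -> Q m (e C i.+1) F = F i.
Proof. move=> H; rewrite /Q axC1 //= ?nth_mk //; by rewrite ltnS ltnW. Qed.

Lemma QC2 (sym : Type) (ar : sym -> nat) (C : cloneAlg ar) m j F :
  m < j -> Q m (e C j) F = e C j.
Proof. move=> H; by rewrite /Q axC2. Qed.

Lemma QC3 (sym : Type) (ar : sym -> nat) (C : cloneAlg ar) m (x : C) :
  Q m x (fun i => e C i.+1) = x.
Proof. exact: axC3. Qed.

Lemma QC4 (sym : Type) (ar : sym -> nat) (C : cloneAlg ar) k n (x : C) F :
  k <= n -> Q k x F = Q n x (fun i => if i < k then F i else e C i.+1).
Proof.
rewrite leq_eqVlt => /orP [/eqP <-|H].
  by apply: Q_ext => i ->.
rewrite /Q (axC4 _ _ H); congr q; apply: eq_mktuple => i /=.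
case: ifP => Hi; first by rewrite nth_mk.
by rewrite nth_default // size_tuple card_ord leqNgt Hi.
Qed.

Lemma QC5 (sym : Type) (ar : sym -> nat) (C : cloneAlg ar) n (x : C) G F :
  Q n (Q n x G) F = Q n x (fun i => Q n (G i) F).
Proof.
rewrite /Q axC5; congr q; apply: eq_from_tnth => i.
by rewrite tnth_map !tnth_mktuple.
Qed.

Lemma indep_step (sym : Type) (ar : sym -> nat) (C : cloneAlg ar) (x : C) j m F :
  0 < j -> j <= m -> indep x j ->
  Q m x F = Q m x (fun i => if i == j.-1 then (if j < m then F j else e C m.+1) else F i).
Proof.
move=> j0 jm Hind.
have Hx : Q j x (fun i => e C (if i.+1 == j then j.+1 else i.+1)) = x by exact: Hind.
rewrite -{1}Hx (QC4 _ _ jm) QC5; apply: Q_ext => i im.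
case: (ltnP i j) => ij.
  case: eqP => [Hij|Hij].
    have -> : i = j.-1 by rewrite -Hij.
    rewrite eqxx; case: ltnP => jm'.
      by rewrite QC1.
    have -> : j = m by apply/eqP; rewrite eqn_leq jm jm'.
    by rewrite QC2.
  rewrite QC1 //; case: eqP => // Hij'; exfalso; apply: Hij; rewrite Hij' prednK.
  by [].
  by [].
rewrite QC1 //; case: eqP => // Hij; exfalso; move: ij; rewrite Hij.
by case: (j) j0 => // k _; rewrite ltnn.
Qed.

Lemma indep_change (sym : Type) (ar : sym -> nat) (C : cloneAlg ar) (x : C) j m F G :
  0 < j -> j <= m -> indep x j ->
  (forall i, i < m -> i != j.-1 -> F i = G i) -> Q m x F = Q m x G.
Proof.
move=> j0 jm Hind HFG.
rewrite (indep_step F j0 jm Hind) (indep_step G j0 jm Hind); apply: Q_ext => i im.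
case: eqP => Hi; last by apply: HFG => //; apply/eqP.
case: ltnP => // jm'; apply: HFG => //.
by case: (j) j0 => // k _ /=; rewrite neq_ltn ltnSn orbT.
Qed.

Lemma key (sym : Type) (ar : sym -> nat) (C : cloneAlg ar) (x : C) n m F G :
  dim_le x n -> n <= m -> (forall i, i < n -> F i = G i) -> Q m x F = Q m x G.
Proof.
move=> Hd nm HFG.
pose H p i := if i < p then F i else G i.
have HH : forall d, d <= m - n -> Q m x (H (n + d)) = Q m x G.
  elim=> [|d IH] Hdm.
    apply: Q_ext => i _; rewrite /H addn0; case: ltnP => // /HFG //.
  rewrite -IH; last exact: ltnW.
  apply: (@indep_change _ _ _ x (n + d).+1) => //.
  - by rewrite -addnS -(subnKC nm) leq_add2l.
  - by apply: Hd; rewrite ltnS leq_addr.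
  move=> i im /= Hi; rewrite /H addnS ltnS leq_eqVlt (negbTE Hi) //.
rewrite -(HH (m - n)) // subnKC //; apply: Q_ext => i im; by rewrite /H im.
Qed.

Lemma dim_le_mono (sym : Type) (ar : sym -> nat) (C : cloneAlg ar) (x : C) n m :
  dim_le x n -> n <= m -> dim_le x m.
Proof. move=> H nm j mj; apply: H; exact: leq_ltn_trans mj. Qed.

Lemma Q_lift (sym : Type) (ar : sym -> nat) (C : cloneAlg ar) (x : C) n m F :
  dim_le x n -> n <= m -> Q n x F = Q m x F.
Proof.
move=> Hd nm; rewrite (QC4 _ _ nm); apply: (key Hd) => // i ->; done.
Qed.

Lemma QC5g (sym : Type) (ar : sym -> nat) (C : cloneAlg ar) (x : C) n m G F :
  dim_le x n -> Q m (Q n x G) F = Q n x (fun i => Q m (G i) F).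
Proof.
move=> Hd; pose N := maxn n m.
have nN : n <= N by rewrite leq_maxl.
have mN : m <= N by rewrite leq_maxr.
rewrite (Q_lift G Hd nN) (QC4 _ _ mN) QC5 -(Q_lift _ Hd nN).
apply: Q_ext => i _; by rewrite -QC4.
Qed.

Lemma cat_mk (T : Type) m n (H : m + (n - m) = n) (F : nat -> T) :
  m <= n ->
  tcast H [tuple of [tuple F i | i < m] ++ [tuple F (m + i) | i < n - m]] = [tuple F i | i < n].
Proof.
move=> mn; apply: eq_from_tnth => i.
rewrite tcastE tnth_mktuple (tnth_nth (F 0)) nth_cat size_tuple.
case: ltnP => im; first by rewrite (nth_mk _ _ im).
rewrite (@nth_mk _ (n - m) (fun k => F (m + k))) /= ?subnKC //.
by rewrite ltn_sub2rE // (leq_trans (ltn_ord i)) // -(subnKC mn) /=. 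
Qed.

Definition opq (sym : Type) (ar : sym -> nat) (C : cloneAlg ar) (x : C) n :=
  @Op C n (fun t => q x t).

Lemma Rof_opq (sym : Type) (ar : sym -> nat) (C : cloneAlg ar) (x : C) n :
  dim_le x n -> Rof x (opq x n).
Proof.
move=> Hd; have Hx : app (opq x n) (etuple (e C) n) = x by exact: axC3.
split => //; split; rewrite Hx //.
Qed.

Lemma rep_le (sym : Type) (ar : sym -> nat) (C : cloneAlg ar) (f g : op C) :
  representable f -> representable g ->
  app f (etuple (e C) (arity f)) = app g (etuple (e C) (arity g)) ->
  arity f <= arity g -> op_le f g.
Proof.
move=> [Hdf Hf] [Hdg Hg] Hfg H; exists H => t b.
rewrite Hf Hg -Hfg (tcastE' _ _ (e C 0)) QE.
rewrite (Q_lift _ Hdf H); apply: (key Hdf) => // i ilt.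
by rewrite nth_cat size_tuple ilt.
Qed.

Lemma rcons_mk (T : Type) n (t : n.-tuple T) y d :
  [tuple of rcons t y] = [tuple (if i < n then nth d t i else y) | i < n.+1].
Proof.
apply: eq_from_tnth => k; rewrite tnth_mktuple (tnth_nth y) /= nth_rcons size_tuple.
case: ltnP => kn; first by apply: set_nth_default; rewrite size_tuple.
by have := ltn_ord k; rewrite ltnS => kn'; rewrite eqn_leq kn kn'.
Qed.

Lemma proj_indep (sym : Type) (ar : sym -> nat) (C : cloneAlg ar) k j :
  k.+1 < j -> indep (e C k.+1) j.
Proof.
move=> kj; rewrite /indep; change (Q j (e C k.+1) (fun i => e C (if i.+1 == j then j.+1 else i.+1)) = e C k.+1).
by rewrite QC1 ?ltn_eqF // (ltn_trans _ kj).
Qed.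
Unset Implicit Arguments. Set Strict Implicit.

Theorem proposition7p4 (sym : Type) (ar : sym -> nat) (C : cloneAlg ar)
  (a b : C) (fa : fin_dim a) (fb : fin_dim b) :
  [/\ (* (1) *)
      (forall f g : op C, RC f -> RC g ->
         (similar f g <->
          app f (etuple (e C) (arity f)) = app g (etuple (e C) (arity g)))),
      (* (2) *)
      is_block (Rof a),
      (* (3) *)
      ((forall f, Rof a f <-> Rof b f) -> a = b),
      (* (4) *)
      ((forall f, RC f <-> exists c : C, fin_dim c /\ Rof c f) /\
       is_clone (@sig _ _ C) (@RC _ _ C)) &
      (* (5) *)
      (forall k, block_arity (Rof a) k <-> has_dim a k)].
Proof.
have P1 : forall f g : op C, RC f -> RC g ->
         (similar f g <->
          app f (etuple (e C) (arity f)) = app g (etuple (e C) (arity g))).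
  move=> f g Rf Rg; split.
    case=> [[H Hle]|[H Hle]].
      have := Hle (etuple (e C) (arity f)) [tuple e C (arity f + i).+1 | i < arity g - arity f].
      by rewrite /etuple (cat_mk _ (fun i => e C i.+1) H).
    have := Hle (etuple (e C) (arity g)) [tuple e C (arity g + i).+1 | i < arity f - arity g].
    by rewrite /etuple (cat_mk _ (fun i => e C i.+1) H).
  move=> Heq; case: (leqP (arity f) (arity g)) => H.
    by left; apply: rep_le.
  by right; apply: rep_le => //; apply: ltnW.
split => //.
- case: fa => n Hn; exists (opq a n) => g; split.
    move=> [Rg ga]; apply/P1 => //; first exact: (Rof_opq Hn).1.
    by rewrite ga; exact: (axC3 n a).
  case=> [[H Hle]|[H Hle]].
    have Hg : forall s, app g s = q a s.
      move=> s; set m := arity g in s H Hle *.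
      rewrite [X in app g X](tuple_nthE s (e C 0)).
      have := Hle [tuple nth (e C 0) s i | i < n] [tuple nth (e C 0) s (n + i) | i < m - n].
      rewrite (cat_mk (subnKC H) (fun i => nth (e C 0) s i) H) => <-.
      by rewrite [in RHS]QE; exact: (Q_lift _ Hn H).
    have Hge : app g (etuple (e C) (arity g)) = a by rewrite Hg; exact: axC3.
    split; [split|] => //; first by rewrite Hge; exact: (dim_le_mono Hn H).
    by move=> s; rewrite Hge Hg.
  set m := arity g in H Hle *.
  have Hle' : forall (t : m.-tuple C) (bb : (n - m).-tuple C), app g t = q a (tcast (subnKC H) [tuple of t ++ bb]) by exact: Hle.
  have Hg : forall t, app g t = q a t.
    move=> t; rewrite (Hle' t [tuple e C (m + i).+1 | i < n - m]) (tcastE' _ _ (e C 0)).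
    rewrite [in RHS]QE (QC4 _ _ H); apply: Q_ext => i i_n; rewrite nth_cat size_tuple.
    case: ltnP => // mi; rewrite (@nth_mk _ (n - m) (fun k => e C (m + k).+1)) ?subnKC //.
    by rewrite ltn_sub2rE.
  have Hag : forall F G, (forall i, i < m -> F i = G i) -> Q n a F = Q n a G.
    move=> F G HFG.
    transitivity (app g [tuple F i | i < m]); first by rewrite (Hle' _ [tuple F (m + i) | i < n - m]) (cat_mk _ F H).
    transitivity (app g [tuple G i | i < m]); first by congr app; apply: eq_mktuple => i; apply: HFG.
    by rewrite (Hle' _ [tuple G (m + i) | i < n - m]) (cat_mk _ G H).
  have Hge : app g (etuple (e C) (arity g)) = a by rewrite Hg; exact: axC3.
  have Hdm : dim_le a m.
    move=> j mj; case: (ltnP n j) => nj; first exact: Hn.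
    change (Q j a (fun i => e C (if i.+1 == j then j.+1 else i.+1)) = a).
    rewrite (QC4 _ _ nj) (Hag _ (fun i => e C i.+1)) ?QC3 // => i im.
    by rewrite (ltn_trans im mj) ltn_eqF // (leq_ltn_trans im mj).
  by split; [split|] => //; rewrite Hge // => s; rewrite Hg.
- move=> H; case: fa => n Hn; have [_ <-] := (H (opq a n)).1 (Rof_opq Hn); exact: (esym (axC3 n a)).
- split.
    move=> f; split.
      move=> Rf; exists (app f (etuple (e C) (arity f))); split => //.
      by exists (arity f); exact: Rf.1.
    by case=> c [_ [Rf _]].
  split.
  + move=> n i; have Hx : tnth (etuple (e C) n) i = e C i.+1 by rewrite tnth_mktuple.
    split; rewrite /= Hx.
      move=> j nj; apply: proj_indep; exact: (leq_ltn_trans (ltn_ord i) nj).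
    by move=> t; rewrite QE QC1 // (tnth_nth (e C 0)).
  + move=> s; split => /=.
      move=> j nj; rewrite /indep axC6; congr sig; apply: eq_from_tnth => k.
      rewrite tnth_map !tnth_mktuple; apply: proj_indep; exact: (leq_ltn_trans (ltn_ord k) nj).
    move=> t; rewrite axC6; congr sig; apply: eq_from_tnth => k.
    by rewrite tnth_map tnth_mktuple QE QC1 // (tnth_nth (e C 0)).
  + move=> f [Hdf Hf] m gs Hgs.
    set n := arity f in gs Hgs *.
    set x := app f (etuple (e C) n).
    pose G k := nth (e C 0) [tuple gs i (etuple (e C) m) | i < n] k.
    have HGd : forall k, k < n -> dim_le (G k) m.
      move=> k kn; rewrite /G (nth_mktuple _ _ (Ordinal kn)); exact: (Hgs _).1.
    have Hh : forall t, app f [tuple gs i t | i < n] = Q m (Q n x G) (fun i => nth (e C 0) t i).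
      move=> t; rewrite Hf (QC5g _ _ _ Hdf) /Q; congr q; apply: eq_mktuple => i.
      have Hgi := (Hgs i).2 t; simpl in Hgi.
      by rewrite Hgi QE /G nth_mktuple.
    have hE : app f [tuple gs i (etuple (e C) m) | i < n] = Q n x G.
      rewrite Hh -[RHS](QC3 m); apply: Q_ext => i im; exact: (@nth_mk _ m (fun k => e C k.+1)).
    split => /=; rewrite hE.
      move=> j mj; rewrite /indep; change (Q j (Q n x G) (fun i => e C (if i.+1 == j then j.+1 else i.+1)) = Q n x G).
      rewrite (QC5g _ _ _ Hdf); apply: Q_ext => k kn; exact: (HGd k kn j mj).
    by move=> t; rewrite Hh [in RHS]QE.
  + move=> n f [Hdf Hf] Hil g Hg; simpl in Hdf, Hf.
    set x := f (etuple (e C) n.+1) in Hdf Hf *.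
    have Hrc : forall (t : n.-tuple C) y, f [tuple of rcons t y] =
        Q n.+1 x (fun i => if i < n then nth (e C 0) t i else y).
      by move=> t y; rewrite Hf (rcons_mk _ _ (e C 0)).
    have hg : g (etuple (e C) n) = x.
      rewrite (Hg _ (e C n.+1)) Hrc -[RHS](QC3 n.+1); apply: Q_ext => i i_n.
      case: ltnP => ni; first exact: (@nth_mk _ n (fun k => e C k.+1)).
      by have -> : i = n by apply/eqP; rewrite eqn_leq ni -ltnS i_n.
    have Hgt : forall t, g t = Q n x (fun i => nth (e C 0) t i).
      move=> t; rewrite (Hg _ (e C n.+1)) Hrc (QC4 _ _ (leqnSn n)); apply: Q_ext => i i_n.
      case: ltnP => // ni.
      by have -> : i = n by apply/eqP; rewrite eqn_leq ni -ltnS i_n.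
    split => /=; rewrite hg.
      move=> j nj; case: (ltnP n.+1 j) => nj'; first exact: Hdf.
      have -> : j = n.+1 by apply/eqP; rewrite eqn_leq nj'.
      rewrite /indep; change (Q n.+1 x (fun i => e C (if i.+1 == n.+1 then n.+2 else i.+1)) = x).
      rewrite -{2}hg (Hg _ (e C n.+2)) Hrc; apply: Q_ext => i i_n.
      case: ltnP => ni; first by rewrite (@nth_mk _ n (fun k => e C k.+1)) // ltn_eqF.
      have -> : i = n by apply/eqP; rewrite eqn_leq ni -ltnS i_n. by rewrite eqxx.
    by move=> t; rewrite Hgt [in RHS]QE.
- move=> k; split.
    case=> f [[[Hdf Hf] fa'] Hmin ak].
    have Hdk : dim_le a k by rewrite -ak -fa'.
    split => //; case: (posnP k) => [->|k0]; [by left|right] => Hind.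
    have Hdk' : dim_le a k.-1.
      move=> j kj; case: (ltnP k j) => kj'; first exact: Hdk.
      by have -> : j = k by apply/eqP; rewrite eqn_leq kj' -(ltn_predK k0).
    have [H _] := Hmin _ (Rof_opq Hdk').
    by move: H; rewrite ak /= -ltnS (ltn_predK k0) ltnn.
  case=> Hd Hk; exists (opq a k); split => //; first exact: Rof_opq.
  move=> g [Rg ga]; apply: rep_le => //; first exact: (Rof_opq Hd).1.
    by rewrite ga; exact: (axC3 k a).
  case: Hk => [-> //|Hn]; rewrite /= leqNgt; apply/negP => gk; apply: Hn.
  by have := Rg.1; rewrite ga => /(_ k gk).
Qed.
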